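(* Let $A,B\in\mathbb{Z}$ with $|A|\leq B$ and $B\geq 2$. Let $\tilde M\in\mathbb{Z}^{2\times 2}$ have characteristic polynomial $x^2+Ax+B$ and let $\mathbf{v}\in\mathbb{Z}^2$ be such that $(\mathbf{v},\tilde M\mathbf{v})$ is linearly independent. Let $\tilde T$ be the unique nonempty compact set with $$\tilde M\tilde T+\frac{B-1}{2}\mathbf{v}=\tilde T\cup(\tilde T+\mathbf{v})\cup\cdots\cup(\tilde T+(B-2)\mathbf{v})\cup(-\tilde T),$$ and let $T$ be the unique nonempty compact set with $$MT+\begin{pmatrix}\frac{B-1}{2}\\0\end{pmatrix}=T\cup\left(T+\begin{pmatrix}1\\0\end{pmatrix}\right)\cup\cdots\cup\left(T+\begin{pmatrix}B-2\\0\end{pmatrix}\right)\cup(-T),\qquad M=\begin{pmatrix}0&-B\\1&-A\end{pmatrix}.$$ Let $C$ be the change-of-base matrix from the canonical basis to the basis $(\mathbf{v},\tilde M\mathbf{v})$, i.e. the matrix whose columns are $\mathbf{v}$ and $\tilde M\mathbf{v}$. Then $\tilde T=CT$.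
   Context: When $B=2$ the unions on the right-hand sides reduce to $\tilde T\cup(-\tilde T)$ and $T\cup(-T)$ respectively. *)

(* Defs.v *)
From HB Require Import structures.
From mathcomp Require Import all_boot all_order all_algebra.
From mathcomp Require Import all_classical all_reals all_analysis.
Set Implicit Arguments. Unset Strict Implicit. Unset Printing Implicit Defensive.
Import Order.TTheory GRing.Theory Num.Theory.
Import numFieldNormedType.Exports.
Local Open Scope classical_set_scope.
Local Open Scope ring_scope.

Definition lin_img (R : realType) (M : 'M[R]_2) (S : set 'cV[R]_2) : set 'cV[R]_2 :=
  [set M *m x | x in S].

Definition transl (R : realType) (S : set 'cV[R]_2) (w : 'cV[R]_2) : set 'cV[R]_2 :=
  [set x + w | x in S].

Definition digit_union (R : realType) (B : int) (S : set 'cV[R]_2) (w : 'cV[R]_2)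
  : set 'cV[R]_2 :=
  (\bigcup_(k in [set k : nat | (k.+2)%:Z <= B]) transl S (k%:R *: w))
  `|` [set - x | x in S].

Definition set_eqn (R : realType) (B : int) (M : 'M[R]_2) (w : 'cV[R]_2)
  (S : set 'cV[R]_2) : Prop :=
  transl (lin_img M S) (((B - 1)%:~R / 2) *: w) = digit_union B S w.

Definition companion (R : realType) (A B : int) : 'M[R]_2 :=
  \matrix_(i < 2, j < 2)
    (if i == 0 then (if j == 0 then 0 else - B%:~R)
     else (if j == 0 then 1 else - A%:~R)).

Definition e1 (R : realType) : 'cV[R]_2 := \col_(i < 2) (if i == 0 then 1 else 0).

Definition toR (R : realType) m n (M : 'M[int]_(m, n)) : 'M[R]_(m, n) :=
  map_mx (fun z : int => z%:~R) M.

Definition basis_mx (R : realType) (Mt : 'M[int]_2) (v : 'cV[int]_2) : 'M[R]_2 :=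
  toR R (row_mx v (Mt *m v)).

(* Main.v *)
Require Import Defs.
From HB Require Import structures.
From mathcomp Require Import all_boot all_order all_algebra.
From mathcomp Require Import all_classical all_reals all_analysis.
From mathcomp Require Import ring lra.
Import Order.TTheory GRing.Theory Num.Theory.
Import numFieldNormedType.Exports.
Local Open Scope classical_set_scope.
Local Open Scope ring_scope.
Section Scalar.
Variable R : realType.
Variables A B : R.
Hypothesis hA : `|A| <= B.
Hypothesis hB : 2 <= B.

Let al : R := 2 * (B + 1) * B ^+ 2 / ((B - 1) * ((B + 1) ^+ 2 - A ^+ 2)).
Let r : R := A / (B * (B + 1)).
Let gp : R := 1 + al / B ^+ 2 - al * r ^+ 2.
Let V (p q : R) : R := al * (p + r * q) ^+ 2 + gp * q ^+ 2.

Lemma B0 : B != 0. Proof. apply/eqP => h; have := hB; lra. Qed.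
Lemma B1 : B - 1 != 0. Proof. apply/eqP => h; have := hB; lra. Qed.
Lemma B2 : B + 1 != 0. Proof. apply/eqP => h; have := hB; lra. Qed.
Lemma AB : A ^+ 2 < (B + 1) ^+ 2.
Proof.
have h1 : -B <= A /\ A <= B by move: hA; rewrite ler_norml => /andP[].
nra.
Qed.
Lemma B3 : (B + 1) ^+ 2 - A ^+ 2 != 0.
Proof. have := AB; apply: contraTneq => h; lra. Qed.

Lemma al_gt0 : 0 < al.
Proof.
rewrite /al; apply: divr_gt0.
  apply: mulr_gt0; last by apply: exprn_gt0; have := hB; lra.
  have := hB; lra.
apply: mulr_gt0; first by have := hB; lra.
by have := AB; lra.
Qed.

Lemma gp_ge1 : 1 <= gp.
Proof.
rewrite /gp /r.
have h1 : 0 <= al / B ^+ 2 - al * (A / (B * (B + 1))) ^+ 2.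
  have -> : al / B ^+ 2 - al * (A / (B * (B + 1))) ^+ 2
     = al / B ^+ 2 * (((B + 1) ^+ 2 - A ^+ 2) / (B + 1) ^+ 2).
    by field; rewrite ?B0 ?B2.
  apply: mulr_ge0; apply: divr_ge0.
  - exact: ltW al_gt0.
  - exact: sqr_ge0.
  - by have := AB; lra.
  - exact: sqr_ge0.
lra.
Qed.

Lemma V_ge0 p q : 0 <= V p q.
Proof.
rewrite /V; apply: addr_ge0; apply: mulr_ge0.
- exact: ltW al_gt0.
- exact: sqr_ge0.
- by have := gp_ge1; lra.
- exact: sqr_ge0.
Qed.

Lemma V_step p q : V p q - V (- A / B * p - 1 / B * q) p = p ^+ 2 + q ^+ 2.
Proof.
rewrite /V /gp /al /r.
field.
by rewrite B0 B1 B2 B3.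
Qed.

Let lam : R := 2 * al * (1 + r ^+ 2) + gp.

Lemma V_le p q : V p q <= lam * (p ^+ 2 + q ^+ 2).
Proof.
rewrite /V /lam.
have ha := al_gt0. have hg := gp_ge1.
rewrite -/al -/r -/gp in ha hg *.
have h1 : (p + r * q) ^+ 2 <= 2 * (p ^+ 2 + r ^+ 2 * q ^+ 2).
  have := sqr_ge0 (p - r * q). rewrite !expr2. nra.
have h2 : al * (p + r * q) ^+ 2 <= al * (2 * (p ^+ 2 + r ^+ 2 * q ^+ 2)).
  by rewrite ler_pM2l.
have h3 : 0 <= p ^+ 2 := sqr_ge0 p.
have h4 : 0 <= q ^+ 2 := sqr_ge0 q.
have h5 : 0 <= r ^+ 2 := sqr_ge0 r.
have h6 : 0 <= al * r ^+ 2 * p ^+ 2 by rewrite mulr_ge0 // mulr_ge0 // ltW.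
have h7 : 0 <= al * q ^+ 2 by rewrite mulr_ge0 // ltW.
have h8 : 0 <= gp * p ^+ 2 by rewrite mulr_ge0 //; lra.
nra.
Qed.

Definition recur (s : nat -> R) := forall k, s k.+2 = - A * s k.+1 - B * s k.

Lemma V_rec s k : recur s ->
  V (s k) (s k.+1) = V (s k.+1) (s k.+2) - (s k.+1 ^+ 2 + s k.+2 ^+ 2).
Proof.
move=> hs.
have hk : s k = - A / B * s k.+1 - 1 / B * s k.+2.
  rewrite hs; field. exact: B0.
rewrite -(V_step (s k.+1) (s k.+2)) -/al -/r -/gp -/V hk.
ring.
Qed.

Lemma lam_ge1 : 1 <= lam.
Proof.
have ha := al_gt0. have hg := gp_ge1.
rewrite -/al -/r -/gp in ha hg *.
rewrite /lam.
have : 0 <= 2 * al * (1 + r ^+ 2).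
  apply: mulr_ge0; first by apply: mulr_ge0; [lra | exact: ltW].
  by have := sqr_ge0 r; lra.
lra.
Qed.

Let rho : R := 1 - lam^-1.

Lemma V_pos p q : p ^+ 2 + q ^+ 2 <= V p q.
Proof.
have := V_step p q; rewrite -/al -/r -/gp -/V.
have := V_ge0 (- A / B * p - 1 / B * q) p; rewrite -/al -/r -/gp -/V.
lra.
Qed.

Lemma V_dec s k : recur s -> V (s k) (s k.+1) <= rho * V (s k.+1) (s k.+2).
Proof.
move=> hs; rewrite V_rec // /rho.
have hl := lam_ge1.
have := V_le (s k.+1) (s k.+2).
set W := V _ _; set Q := _ + _.
move=> h.
have : W / lam <= Q.
  by rewrite ler_pdivrMr; lra.
rewrite mulrBl mul1r mulrC.
lra.
Qed.

Lemma V_decay n : forall s, recur s -> V (s 0%N) (s 1%N) <= rho ^+ n * V (s n) (s n.+1).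
Proof.
elim: n => [|n IH] s hs; first by rewrite expr0 mul1r.
have hs' : recur (fun k => s k.+1) by move=> k; exact: hs.
apply: le_trans (V_dec s 0%N hs) _.
have := IH _ hs'; rewrite /= => h.
rewrite exprS -mulrA; apply: ler_wpM2l => //.
rewrite /rho subr_ge0 invf_le1 //; have := lam_ge1; lra.
Qed.

Lemma expansion K e : 0 < e -> exists n, forall s, recur s ->
  `|s n| <= K -> `|s n.+1| <= K -> `|s 0%N| < e.
Proof.
move=> e0.
have hl := lam_ge1.
have rho0 : 0 <= rho.
  rewrite /rho subr_ge0 invf_le1 //; lra.
have rho1 : `|rho| < 1.
  rewrite ger0_norm // /rho; rewrite ltrBlDr -[X in X < _]addr0 ltrD2l invr_gt0; lra.
set D := e ^+ 2 / (lam * (2 * K ^+ 2) + 1).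
have hD0 : 0 < lam * (2 * K ^+ 2) + 1.
  have : 0 <= lam * (2 * K ^+ 2).
    have hK := sqr_ge0 K; apply: mulr_ge0; [lra | apply: mulr_ge0; [lra | exact: hK]].
  lra.
have D0 : 0 < D by rewrite divr_gt0 // exprn_gt0.
have [N _ HN] := cvgr0_norm_lt _ (cvg_expr rho1) _ D0.
exists N => s hs hn hn1.
have := HN N (leqnn N) => /=.
rewrite ger0_norm ?exprn_ge0 // => hrN.
have h1 := V_decay N s hs.
have h2 := V_le (s N) (s N.+1).
have h3 := V_pos (s 0%N) (s 1%N).
have hsq : forall x, `|x| <= K -> x ^+ 2 <= K ^+ 2.
  move=> x hx. rewrite -real_normK ?num_real //.
  rewrite lerXn2r // ?nnegrE //; exact: le_trans hx.
have h4 := hsq _ hn. have h5 := hsq _ hn1.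
have h6 : V (s N) (s N.+1) <= lam * (2 * K ^+ 2) by
  apply: (le_trans h2); rewrite ler_pM2l; lra.
have h7 : rho ^+ N * V (s N) (s N.+1) <= D * (lam * (2 * K ^+ 2)).
  apply: ler_pM; [exact: exprn_ge0 | exact: V_ge0 | exact: ltW | exact: h6].
have h8 : D * (lam * (2 * K ^+ 2)) < e ^+ 2.
  rewrite /D mulrAC ltr_pdivrMr //. 
  have := exprn_gt0 2 e0. nra.
have h9 : s 0%N ^+ 2 < e ^+ 2.
  have := sqr_ge0 (s 1%N). lra.
rewrite ltr_norml; apply/andP; split; rewrite !expr2 in h9; nra.
Qed.

End Scalar.
Section Mx.
Variable R : realType.

Lemma entry_le m n (x : 'M[R]_(m, n)) i j : `|x i j| <= `|x|.
Proof.
rewrite [leRHS]/Num.norm /= mx_normrE.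
by apply/bigmax_geP; right; exists (i, j).
Qed.

Lemma norm_le_entries m n (x : 'M[R]_(m, n)) M : 0 <= M ->
  (forall i j, `|x i j| <= M) -> `|x| <= M.
Proof.
move=> M0 h; rewrite [leLHS]/Num.norm /= mx_normrE.
by apply/bigmax_leP; split => // ij _; exact: h.
Qed.

Lemma mx_lip (X : 'M[R]_2) (u : 'cV[R]_2) : `|X *m u| <= (`|X| *+ 2) * `|u|.
Proof.
apply: norm_le_entries; first by rewrite mulr_ge0 // mulrn_wge0.
move=> i j; rewrite mxE.
apply: le_trans (ler_norm_sum _ _ _) _.
rewrite mulr2n mulrDl big_ord_recr big_ord1 /=.
apply: lerD; rewrite normrM; apply: ler_pM => //; exact: entry_le.
Qed.

End Mx.
Arguments entry_le {R m n} x i j.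
Arguments norm_le_entries {R m n} x M.
Arguments mx_lip {R} X u.
Section Mx2.
Variable R : realType.

Lemma mx_expansion (X : 'M[R]_2) (a b : R) : `|a| <= b -> 2 <= b ->
  X ^+ 2 = - (a *: X) - b%:M ->
  forall K e, 0 < e -> exists n, forall d : 'cV[R]_2,
    `|X ^+ n *m d| <= K -> `|X ^+ n.+1 *m d| <= K -> `|d| < e.
Proof.
move=> ha hb hX K e e0.
have e20 : 0 < e / 2 by rewrite divr_gt0.
have [n Hn] := @expansion _ _ _ ha hb K _ e20.
exists n => d h1 h2.
have hd : `|d| <= e / 2.
  apply: norm_le_entries; first exact: ltW.
  move=> i j; rewrite (ord1 j).
  pose s k := (X ^+ k *m d) i ord0.
  have hs : recur R a b s.
    move=> k; rewrite /s.
    have -> : X ^+ k.+2 = X ^+ 2 * X ^+ k by rewrite -exprD add2n.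
    rewrite hX mulrBl mulNr -scalerAl -exprS -!mulmxE mulmxBl mulNmx.
    rewrite -scalemxAl mul_scalar_mx -scalemxAl !mxE.
    ring.
  have hn1 : `|s n| <= K by rewrite /s; apply: le_trans (entry_le _ i ord0) h1.
  have hn2 : `|s n.+1| <= K by rewrite /s; apply: le_trans (entry_le _ i ord0) h2.
  have := Hn s hs hn1 hn2.
  by rewrite /s expr0 mul1mx => /ltW.
have : e / 2 < e by rewrite ltr_pdivrMr //; lra.
lra.
Qed.

End Mx2.
Section Uniq.
Variable R : realType.

Lemma incl (X : 'M[R]_2) (w : 'cV[R]_2) (Bi : int) (S1 S2 : set 'cV[R]_2) :
  (forall K e, 0 < e -> exists n, forall d : 'cV[R]_2,
    `|X ^+ n *m d| <= K -> `|X ^+ n.+1 *m d| <= K -> `|d| < e) ->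
  S2 !=set0 -> (exists K1, forall x, S1 x -> `|x| <= K1) ->
  (exists K2, forall x, S2 x -> `|x| <= K2) -> closed S2 ->
  set_eqn Bi X w S1 -> set_eqn Bi X w S2 -> S1 `<=` S2.
Proof.
move=> hexp [z0 hz0] [K1 hK1] [K2 hK2] hcl e1 e2.
set c : R := ((Bi - 1)%:~R / 2).
have claim : forall n x, S1 x -> exists x', S2 x' /\ exists y z, S1 y /\ S2 z /\
    (X ^+ n *m (x - x') = y - z \/ X ^+ n *m (x - x') = z - y).
  elim => [|n IH] x hx.
    exists z0; split => //; exists x, z0; do 2 split => //.
    by left; rewrite expr0 mul1mx.
  have hm : digit_union Bi S1 w (X *m x + c *: w).
    by rewrite -e1; exists (X *m x) => //; exists x.
  have Xsucc : forall u : 'cV[R]_2, X ^+ n.+1 *m u = X ^+ n *m (X *m u).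
    by move=> u; rewrite exprSr -mulmxE -mulmxA.
  case: hm => [[k hk [y1 hy1 Ey1]] | [y1 hy1 Ey1]].
    have [y1' [hy1' [y [z [hy [hz H]]]]]] := IH y1 hy1.
    have hm2 : digit_union Bi S2 w (y1' + k%:R *: w).
      by left; exists k => //; exists y1'.
    rewrite -e2 in hm2; case: hm2 => q [x' hx' Eq'] Eq; subst q.
    exists x'; split => //; exists y, z; do 2 split => //.
    have hXx : X *m x = y1 + k%:R *: w - c *: w by rewrite Ey1 addrK.
    have hXx' : X *m x' = y1' + k%:R *: w - c *: w by rewrite -Eq addrK.
    rewrite Xsucc.
    have -> : X *m (x - x') = y1 - y1'.
      rewrite mulmxBr hXx hXx'; apply/matrixP => i j; rewrite !mxE; ring.
    exact: H.
  have [y1' [hy1' [y [z [hy [hz H]]]]]] := IH y1 hy1.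
  have hm2 : digit_union Bi S2 w (- y1').
    by right; exists y1'.
  rewrite -e2 in hm2; case: hm2 => q [x' hx' Eq'] Eq; subst q.
  exists x'; split => //; exists y, z; do 2 split => //.
  have hXx : X *m x = - y1 - c *: w by rewrite Ey1 addrK.
  have hXx' : X *m x' = - y1' - c *: w by rewrite -Eq addrK.
  rewrite Xsucc.
  have -> : X *m (x - x') = - (y1 - y1').
    rewrite mulmxBr hXx hXx'; apply/matrixP => i j; rewrite !mxE; ring.
  rewrite mulmxN.
  case: H => ->; [right | left]; apply/matrixP => i j; rewrite !mxE; ring.
move=> x hx.
rewrite ((closure_id S2).1 hcl).
move=> U /nbhs_ballP [e e0 hU].
set K0 := `|K1| + `|K2|.
have hyz : forall y z, S1 y -> S2 z -> `|y - z| <= K0.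
  move=> y z hy hz; apply: le_trans (ler_normB _ _) _.
  apply: lerD.
    by apply: le_trans (hK1 _ hy) _; exact: ler_norm.
  by apply: le_trans (hK2 _ hz) _; exact: ler_norm.
have K00 : 0 <= K0 by rewrite addr_ge0.
have [n Hn] := hexp (K0 * (1 + `|X| *+ 2)) e e0.
have [x' [hx' [y [z [hy [hz H]]]]]] := claim n x hx.
exists x'; split => //; apply: hU.
rewrite -ball_normE /ball_ /=.
have hb : `|y - z| <= K0 * (1 + `|X| *+ 2).
  apply: le_trans (hyz _ _ hy hz) _.
  by rewrite ler_peMr // lerDl mulrn_wge0.
have hzy : `|z - y| <= K0 * (1 + `|X| *+ 2) by rewrite distrC.
apply: Hn.
  by case: H => ->.
rewrite exprS -mulmxE -mulmxA.
apply: le_trans (mx_lip _ _) _.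
rewrite mulrDr mulr1 mulrC.
have hK : `|X ^+ n *m (x - x')| <= K0.
  by case: H => ->; [exact: hyz | rewrite distrC; exact: hyz].
apply: le_trans (_ : K0 * (`|X| *+ 2) <= _).
  by apply: ler_wpM2r => //; rewrite mulrn_wge0.
by rewrite lerDr.
Qed.
End Uniq.
Section Final.
Variable R : realType.

Lemma transport (X Y Cm : 'M[R]_2) (w u : 'cV[R]_2) (Bi : int) (T : set 'cV[R]_2) :
  X *m Cm = Cm *m Y -> Cm *m u = w -> set_eqn Bi Y u T ->
  set_eqn Bi X w (lin_img Cm T).
Proof.
move=> hXC hCu eT; rewrite /set_eqn.
set c : R := ((Bi - 1)%:~R / 2).
have key : forall t, X *m (Cm *m t) + c *: w = Cm *m (Y *m t + c *: u).
  by move=> t; rewrite mulmxA hXC -mulmxA mulmxDr -scalemxAr hCu.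
apply/seteqP; split => p.
  case => _ [_ [t ht <-] <-] <-.
  have : digit_union Bi T u (Y *m t + c *: u).
    by rewrite -eT; exists (Y *m t) => //; exists t.
  rewrite key.
  case => [[k hk [t' ht' E]] | [t' ht' E]]; rewrite -E.
    left; exists k => //; exists (Cm *m t'); first by exists t'.
    by rewrite mulmxDr -scalemxAr hCu.
  right; exists (Cm *m t'); first by exists t'.
  by rewrite mulmxN.
case => [[k hk [_ [t ht <-] <-]] | [_ [t ht <-] <-]].
  have : digit_union Bi T u (t + k%:R *: u) by left; exists k => //; exists t.
  rewrite -eT => -[_ [t' ht' <-] E].
  exists (X *m (Cm *m t')); first by exists (Cm *m t') => //; exists t'.
  by rewrite key E mulmxDr -scalemxAr hCu.
have : digit_union Bi T u (- t) by right; exists t.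
rewrite -eT => -[_ [t' ht' <-] E].
exists (X *m (Cm *m t')); first by exists (Cm *m t') => //; exists t'.
by rewrite key E mulmxN.
Qed.

Lemma rowE2 (V W : 'cV[R]_2) i (j : 'I_2) :
  row_mx V W i j = if val j == 0%N then V i 0 else W i 0.
Proof.
case: j => [[|[|//]]] hj /=.
  have -> : Ordinal hj = lshift 1 (ord0 : 'I_1) by apply: val_inj.
  by rewrite row_mxEl.
have -> : Ordinal hj = rshift 1 (ord0 : 'I_1) by apply: val_inj.
by rewrite row_mxEr.
Qed.

Lemma CH (A B : int) (Mt : 'M[int]_2) :
  char_poly Mt = 'X^2 + A%:P * 'X + B%:P ->
  Mt ^+ 2 = - (A *: Mt) - B%:M.
Proof.
move=> hc; have := Cayley_Hamilton Mt; rewrite hc.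
rewrite !rmorphD rmorphM /= horner_mx_X !horner_mx_C rmorphM /= horner_mx_X horner_mx_C.
move=> h; rewrite -(subr0 (Mt ^+ 2)) -h expr2 -!mulmxE mul_scalar_mx.
by rewrite !opprD !addrA subrr add0r.
Qed.

Lemma CHR (A B : int) (Mt : 'M[int]_2) :
  char_poly Mt = 'X^2 + A%:P * 'X + B%:P ->
  toR R Mt ^+ 2 = - (A%:~R *: toR R Mt) - (B%:~R)%:M.
Proof.
move=> hc; have := congr1 (@toR R 2 2) (@CH A B Mt hc).
rewrite /toR expr2 map_mxM map_mxD !map_mxN map_mxZ map_scalar_mx => h.
by rewrite expr2 -mulmxE; exact: h.
Qed.


Lemma rowE2i (V W : 'cV[int]_2) i (j : 'I_2) :
  row_mx V W i j = if val j == 0%N then V i 0 else W i 0.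
Proof.
case: j => [[|[|//]]] hj /=.
  have -> : Ordinal hj = lshift 1 (ord0 : 'I_1) by apply: val_inj.
  by rewrite row_mxEl.
have -> : Ordinal hj = rshift 1 (ord0 : 'I_1) by apply: val_inj.
by rewrite row_mxEr.
Qed.

Lemma basisE (Mt : 'M[int]_2) (v : 'cV[int]_2) i j :
  basis_mx R Mt v i j =
  if val j == 0%N then toR R v i 0 else (toR R Mt *m toR R v) i 0.
Proof.
rewrite /basis_mx /toR [LHS]mxE rowE2i.
case: ifP => _; first by rewrite mxE.
rewrite !mxE rmorph_sum; apply: eq_bigr => k _; by rewrite !mxE rmorphM.
Qed.

Lemma colC (Mt : 'M[int]_2) (v : 'cV[int]_2) j :
  basis_mx R Mt v *m delta_mx j 0 =
  if val j == 0%N then toR R v else toR R Mt *m toR R v.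
Proof.
rewrite -colE; apply/matrixP => i k; rewrite (ord1 k) [LHS]mxE basisE.
by case: ifP.
Qed.

Lemma compE (A B : int) i j : companion R A B i j =
    (if i == 0 then (if j == 0 then 0 else - B%:~R)
     else (if j == 0 then 1 else - A%:~R)).
Proof. by rewrite mxE. Qed.

Lemma XC (A B : int) (Mt : 'M[int]_2) (v : 'cV[int]_2) :
  char_poly Mt = 'X^2 + A%:P * 'X + B%:P ->
  toR R Mt *m basis_mx R Mt v = basis_mx R Mt v *m companion R A B.
Proof.
move=> hc; have hX := @CHR A B Mt hc.
apply/matrixP => i j.
have -> : (toR R Mt *m basis_mx R Mt v) i j
    = (toR R Mt *m (basis_mx R Mt v *m delta_mx j (0 : 'I_1))) i 0.
  by rewrite mulmxA -colE [RHS]mxE.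
rewrite colC [RHS]mxE big_ord_recr big_ord1 /= !basisE /= !compE /=.
case: j => [[|[|//]]] hj /=.
  by rewrite mulr0 add0r mulr1.
rewrite mulmxA.
have -> : toR R Mt *m toR R Mt = toR R Mt ^+ 2 by rewrite expr2 mulmxE.
rewrite hX mulmxBl mulNmx -scalemxAl mul_scalar_mx !mxE.
ring.
Qed.

Lemma Ce1 (Mt : 'M[int]_2) (v : 'cV[int]_2) :
  basis_mx R Mt v *m e1 R = toR R v.
Proof.
apply/matrixP => i j; rewrite (ord1 j) !mxE big_ord_recr big_ord1 /= !basisE /= !mxE /=.
by rewrite mulr0 addr0 mulr1.
Qed.

End Final.
Lemma cpt_bnd (R : realType) (S : set 'cV[R]_2) :
  compact S -> exists K, forall x, S x -> `|x| <= K.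
Proof.
move=> /compact_bounded [M [_ HM]]; exists (M + 1) => x Sx.
by apply: (HM (M + 1)) => //; rewrite ltrDl.
Qed.

Lemma mul_cont (R : realType) (C : 'M[R]_2) :
  continuous (fun x : 'cV[R]_2 => C *m x).
Proof.
apply: (@bounded_linear_continuous _ _ _ (mulmx C)).
apply/bounded_funP => r; exists ((`|C| *+ 2) * r) => x hx.
apply: le_trans (mx_lip _ _) _.
by apply: ler_wpM2l => //; rewrite mulrn_wge0.
Qed.

Theorem lemma2p3 (R : realType) (A B : int) (Mt : 'M[int]_2) (v : 'cV[int]_2)
  (Tt T : set 'cV[R]_2) :
  `|A| <= B -> 2 <= B ->
  char_poly Mt = 'X^2 + A%:P * 'X + B%:P ->
  free [:: toR R v; toR R (Mt *m v)] ->
  Tt !=set0 -> compact Tt -> set_eqn B (toR R Mt) (toR R v) Tt ->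
  T !=set0 -> compact T -> set_eqn B (companion R A B) (e1 R) T ->
  Tt = lin_img (basis_mx R Mt v) T.
Proof.
move=> hA hB hc _ Tt0 cTt eTt T0 cT eT.
have eCT : set_eqn B (toR R Mt) (toR R v) (lin_img (basis_mx R Mt v) T).
  exact: (@transport R _ _ _ _ _ B T (@XC R A B Mt v hc) (Ce1 R Mt v) eT).
have ha : `|(A%:~R : R)| <= B%:~R by rewrite -intr_norm ler_int.
have hb : (2 : R) <= B%:~R.
  have := hB; rewrite -(ler_int R) => h; exact: h.
have hexp := @mx_expansion R _ _ _ ha hb (@CHR R A B Mt hc).
have cCT : compact (lin_img (basis_mx R Mt v) T).
  apply: continuous_compact => //.
  apply: continuous_subspaceT; exact: mul_cont.
have CT0 : lin_img (basis_mx R Mt v) T !=set0.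
  by case: T0 => t ht; exists (basis_mx R Mt v *m t); exists t.
apply/seteqP; split.
  apply: (@incl R (toR R Mt) (toR R v) B _ _ hexp) => //.
  - exact: cpt_bnd.
  - exact: cpt_bnd.
  - apply: compact_closed cCT; exact: norm_hausdorff.
apply: (@incl R (toR R Mt) (toR R v) B _ _ hexp) => //.
- exact: cpt_bnd.
- exact: cpt_bnd.
- apply: compact_closed cTt; exact: norm_hausdorff.
Qed.
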